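(* In the Bell scenario with $\mathcal{X}=\mathcal{Y}=\mathcal{A}=\mathcal{B}=\{0,1\}$, the conditional distribution $p^H$ defined by $p^H(00|00)=\tfrac{5\sqrt5-11}{2}$, $p^H(01|00)=p^H(10|00)=\tfrac{7-3\sqrt5}{2}$, $p^H(11|00)=\tfrac{\sqrt5-1}{2}$; $p^H(00|01)=\sqrt5-2$, $p^H(01|01)=0$, $p^H(10|01)=\tfrac{7-3\sqrt5}{2}$, $p^H(11|01)=\tfrac{\sqrt5-1}{2}$; $p^H(00|10)=\sqrt5-2$, $p^H(01|10)=\tfrac{7-3\sqrt5}{2}$, $p^H(10|10)=0$, $p^H(11|10)=\tfrac{\sqrt5-1}{2}$; $p^H(00|11)=0$, $p^H(01|11)=p^H(10|11)=\tfrac{3-\sqrt5}{2}$, $p^H(11|11)=\sqrt5-2$ (where $p^H(ab|xy)$ is listed as $p^H(ab|xy)$ with the pair $xy$ after the bar) belongs to $\mathcal{P}_2^{AB,(1/4,1/4)}$. Consequently, for any $0<l\le h$ and any distribution $p_{XY}$ with $l\le p_{XY}(xy)\le h$ for all $x,y$, the joint behavior $p_{XY}(xy)\,p^H(ab|xy)$ lies in the $(l,h,1/4,1/4)$-MDPDL set.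
   Context: $\mathcal{P}_2^{AB,(\epsilon_A,\epsilon_B)}$ denotes the set of all conditional distributions $p=(p(ab|xy))$ for which there exist a probability space $(\Lambda,q)$ and distributions $p_A(\cdot|x,y,\lambda)$ on $\mathcal{A}$, $p_B(\cdot|x,y,\lambda)$ on $\mathcal{B}$ with $p(ab|xy)=\int q(d\lambda)p_A(a|xy\lambda)p_B(b|xy\lambda)$, $\frac12\sum_a|p_A(a|xy\lambda)-p_A(a|xy'\lambda)|\le\epsilon_A$ for all $x,y,y',\lambda$, and $\frac12\sum_b|p_B(b|xy\lambda)-p_B(b|x'y\lambda)|\le\epsilon_B$ for all $y,x,x',\lambda$. The $(l,h,\epsilon_A,\epsilon_B)$-MDPDL set is the set of joint distributions $p(abxy)=\int q(d\lambda)\,p_{XY|\Lambda}(xy|\lambda)\,p_A(a|xy\lambda)\,p_B(b|xy\lambda)$ with $l\le p_{XY|\Lambda}(xy|\lambda)\le h$ for all $x,y,\lambda$ and $p_A,p_B$ satisfying the same two total-variation constraints. *)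

(* Defs.v *)
(* Bell scenario with X = Y = A = B = bool (0 = false, 1 = true). *)
From HB Require Import structures.
From mathcomp Require Import all_boot all_order all_algebra.
From mathcomp Require Import all_classical all_reals all_analysis.
Set Implicit Arguments. Unset Strict Implicit. Unset Printing Implicit Defensive.
Import Order.TTheory GRing.Theory Num.Theory.
Local Open Scope ring_scope.

Definition is_dist (R : realType) (f : bool -> R) : Prop :=
  (forall a, 0 <= f a) /\ f false + f true = 1.

Definition is_dist2 (R : realType) (f : bool -> bool -> R) : Prop :=
  (forall x y, 0 <= f x y) /\ \sum_(x : bool) \sum_(y : bool) f x y = 1.

Definition tv (R : realType) (f g : bool -> R) : R :=
  2^-1 * (`|f false - g false| + `|f true - g true|).

(* Conditional distributions are written p a b x y = p(ab|xy). *)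
Definition inP2 (R : realType) (eA eB : R) (p : bool -> bool -> bool -> bool -> R) : Prop :=
  exists (d : measure_display) (L : measurableType d) (q : probability L R)
         (pA pB : bool -> bool -> L -> bool -> R),
    (forall x y a, measurable_fun setT (fun l => pA x y l a)) /\
    (forall x y b, measurable_fun setT (fun l => pB x y l b)) /\
    (forall x y l, is_dist (pA x y l) /\ is_dist (pB x y l)) /\
    (forall a b x y,
        ((p a b x y)%:E = \int[q]_(l in setT) (pA x y l a * pB x y l b)%:E)%E) /\
    (forall x y y' l, tv (pA x y l) (pA x y' l) <= eA) /\
    (forall x x' y l, tv (pB x y l) (pB x' y l) <= eB).

(* (l,h,eA,eB)-MDPDL set; joint distributions written P a b x y = p(abxy). *)
Definition inMDPDL (R : realType) (lo hi eA eB : R) (P : bool -> bool -> bool -> bool -> R) : Prop :=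
  exists (d : measure_display) (L : measurableType d) (q : probability L R)
         (pXY : L -> bool -> bool -> R)
         (pA pB : bool -> bool -> L -> bool -> R),
    (forall x y, measurable_fun setT (fun l => pXY l x y)) /\
    (forall x y a, measurable_fun setT (fun l => pA x y l a)) /\
    (forall x y b, measurable_fun setT (fun l => pB x y l b)) /\
    (forall l, is_dist2 (pXY l)) /\
    (forall x y l, lo <= pXY l x y <= hi) /\
    (forall x y l, is_dist (pA x y l) /\ is_dist (pB x y l)) /\
    (forall a b x y,
        ((P a b x y)%:E = \int[q]_(l in setT) (pXY l x y * pA x y l a * pB x y l b)%:E)%E) /\
    (forall x y y' l, tv (pA x y l) (pA x y' l) <= eA) /\
    (forall x x' y l, tv (pB x y l) (pB x' y l) <= eB).

Definition pH (R : realType) (a b x y : bool) : R :=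
  let s := Num.sqrt (5 : R) in
  match x, y, a, b with
  | false, false, false, false => (5 * s - 11) / 2
  | false, false, false, true  => (7 - 3 * s) / 2
  | false, false, true,  false => (7 - 3 * s) / 2
  | false, false, true,  true  => (s - 1) / 2
  | false, true,  false, false => s - 2
  | false, true,  false, true  => 0
  | false, true,  true,  false => (7 - 3 * s) / 2
  | false, true,  true,  true  => (s - 1) / 2
  | true,  false, false, false => s - 2
  | true,  false, false, true  => (7 - 3 * s) / 2
  | true,  false, true,  false => 0
  | true,  false, true,  true  => (s - 1) / 2
  | true,  true,  false, false => 0
  | true,  true,  false, true  => (3 - s) / 2
  | true,  true,  true,  false => (3 - s) / 2
  | true,  true,  true,  true  => s - 2
  end.

(* Main.v *)
Require Import Defs.
From HB Require Import structures.
From mathcomp Require Import all_boot all_order all_algebra.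
From mathcomp Require Import all_classical all_reals all_analysis.
From mathcomp Require Import ring lra.
Import Order.TTheory GRing.Theory Num.Theory.
Local Open Scope ring_scope.
Section S.
Variable R : realType.
Definition s : R := Num.sqrt 5.
Lemma s2 : s * s = 5. Proof. by rewrite /s -expr2 sqr_sqrtr. Qed.
Lemma s0 : 0 <= s. Proof. exact: sqrtr_ge0. Qed.
Lemma sb1 : 2236/1000 < s.
Proof. have h1 := s2; have h2 := s0. 
rewrite ltNge; apply/negP => h. have := ler_wpM2r h2 h; rewrite h1 => h3; lra. Qed.
Lemma sb2 : s < 2237/1000.
Proof. have h1 := s2; have h2 := s0.
rewrite ltNge; apply/negP => h. have := ler_wpM2r h2 h; rewrite h1 => h3; lra. Qed.

Definition w (k : nat) : R :=
  match k with 0 | 2 => 36 - 16 * s | 1 | 3 => 68 * s - 152 | 4 | 5 => (235 - 105 * s)/2 | 6 => s - 2 | _ => 0 end.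
Lemma w_ge0 k : 0 <= w k.
Proof. have h1 := sb1; have h2 := sb2. do 7?[case: k => [|k]]; rewrite /= ?lexx //; lra. Qed.

Definition mm : {measure set nat -> \bar R}^nat :=
  fun k => mscale (NngNum (w_ge0 k)) (@dirac _ nat k R).
Definition q (A : set nat) : \bar R := msum mm 7 A.
Let q0 : q set0 = 0%E. Proof. exact: measure0. Qed.
Let q_ge0 A : (0 <= q A)%E. Proof. exact: measure_ge0. Qed.
Let q_sa : semi_sigma_additive q. Proof. exact: (@measure_semi_sigma_additive _ _ _ (msum mm 7)). Qed.
HB.instance Definition _ := isMeasure.Build _ _ _ q q0 q_ge0 q_sa.
Let qT : q setT = 1%E.
Proof.
rewrite /q /msum /mm /=. rewrite !big_ord_recr big_ord0 /= /mscale /= !diracT !mule1 /=.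
rewrite -!EFinD; congr EFin. rewrite /w; lra.
Qed.
HB.instance Definition _ := Measure_isProbability.Build _ _ _ q qT.

Lemma mnat (f : nat -> R) : measurable_fun setT f.
Proof. by []. Qed.

Lemma intq (f : nat -> R) : (forall l, 0 <= f l) ->
  (\int[q]_(l in setT) (f l)%:E = (\sum_(k < 7) w k * f k)%:E)%E.
Proof.
move=> f0.
change (\int[msum mm 7]_(l in setT) (f l)%:E = (\sum_(k < 7) w k * f k)%:E)%E.
rewrite ge0_integral_measure_sum //; last by move=> l _; rewrite lee_fin.
rewrite -sumEFin; apply: eq_bigr => k _.
rewrite /mm ge0_integral_mscale //; last by move=> l _; rewrite lee_fin.
by rewrite integral_dirac // diracT mul1e.
Qed.
Definition al (l : nat) (x y : bool) : R :=
  match l, x, y with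
  | 0, false, false => (s + 1) / 4 | 0, false, true => 1
  | 1, false, true => 1/4
  | 2, false, false => 1/4 | 2, true, _ => 1
  | 3, true, _ => 1 | 4, true, _ => 1
  | _, _, _ => 0 end.
Definition be (l : nat) (x y : bool) : R :=
  match l, x, y with
  | 0, false, false => 1/4 | 0, _, true => 1
  | 1, _, true => 1
  | 2, false, false => (s + 1) / 4 | 2, true, false => 1
  | 3, true, false => 1/4
  | 5, _, true => 1
  | _, _, _ => 0 end.
Definition dd (u : R) (a : bool) : R := if a then 1 - u else u.
Definition pA x y l := dd (al l x y).
Definition pB x y l := dd (be l x y).

Lemma dd_dist u : 0 <= u <= 1 -> is_dist (dd u).
Proof. move=> /andP[h1 h2]; split; last by rewrite /dd; ring.
by case; rewrite /dd //; lra. Qed.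

Lemma tv_dd u v : tv (dd u) (dd v) = `|u - v|.
Proof.
rewrite /tv /dd /=. have -> : 1 - u - (1 - v) = - (u - v) by ring.
rewrite normrN; lra.
Qed.

Lemma dd_ge0 u a : 0 <= u <= 1 -> 0 <= dd u a.
Proof. by case/dd_dist => h _; exact: h. Qed.
Lemma X01 : 0 <= (s + 1) / 4 <= 1.
Proof. have h1 := sb1; have h2 := sb2. apply/andP; split; lra. Qed.
Lemma q01 : 0 <= (1/4 : R) <= 1.
Proof. apply/andP; split; lra. Qed.
Lemma c01 : 0 <= (0 : R) <= 1. Proof. by rewrite lexx ler01. Qed.
Lemma c11 : 0 <= (1 : R) <= 1. Proof. by rewrite lexx ler01. Qed.
Lemma al01 l x y : 0 <= al l x y <= 1.
Proof. 
by do 7?[case: l => [|l]]; case: x; case: y => /=; first [exact: X01 | exact: q01 | exact: c01 | exact: c11]. Qed.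
Lemma be01 l x y : 0 <= be l x y <= 1.
Proof. 
by do 7?[case: l => [|l]]; case: x; case: y => /=; first [exact: X01 | exact: q01 | exact: c01 | exact: c11]. Qed.
Lemma tvA0 l x : `|al l x false - al l x true| <= 4^-1.
Proof. have h1 := sb1; have h2 := sb2.
do 7?[case: l => [|l]]; case: x => /=; rewrite ?subrr ?normr0 ?invr_ge0 ?ler0n //; rewrite ler_norml; apply/andP; split; lra. Qed.
Lemma tvB0 l y : `|be l false y - be l true y| <= 4^-1.
Proof. have h1 := sb1; have h2 := sb2.
do 7?[case: l => [|l]]; case: y => /=; rewrite ?subrr ?normr0 ?invr_ge0 ?ler0n //; rewrite ler_norml; apply/andP; split; lra. Qed.
Lemma tvA x y y' l : `|al l x y - al l x y'| <= 4^-1.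
Proof. case: y; case: y'; rewrite ?subrr ?normr0 ?invr_ge0 ?ler0n // ?(distrC (al l x true)); exact: tvA0. Qed.
Lemma tvB x x' y l : `|be l x y - be l x' y| <= 4^-1.
Proof. case: x; case: x'; rewrite ?subrr ?normr0 ?invr_ge0 ?ler0n // ?(distrC (be l true y)); exact: tvB0. Qed.
Lemma key a b x y : pH R a b x y = \sum_(k < 7) w k * (pA x y k a * pB x y k b).
Proof.
have h := s2.
rewrite !big_ord_recr big_ord0 /=.
by case: a; case: b; case: x; case: y; rewrite /pH /pA /pB /dd /w /= -/s; lra.
Qed.
End S.

Theorem mainTheorem5 (R : realType) :
  inP2 (4^-1 : R) 4^-1 (@pH R) /\
  (forall (lo hi : R) (pXY : bool -> bool -> R),
      0 < lo -> lo <= hi ->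
      is_dist2 pXY ->
      (forall x y, lo <= pXY x y <= hi) ->
      inMDPDL lo hi 4^-1 4^-1 (fun a b x y => pXY x y * pH R a b x y)).
Proof.
have pAB0 : forall x y l a b, 0 <= pA R x y l a * pB R x y l b.
  by move=> x y l a b; apply: mulr_ge0; apply: dd_ge0; [exact: al01|exact: be01].
have intg : forall a b x y, ((pH R a b x y)%:E =
    \int[q R]_(l in setT) (pA R x y l a * pB R x y l b)%:E)%E.
  by move=> a b x y; rewrite intq ?key.
split.
  exists _, nat, (q R), (pA R), (pB R).
  split; first by move=> *; exact: mnat.
  split; first by move=> *; exact: mnat.
  split; first by move=> x y l; split; apply: dd_dist; [exact: al01|exact: be01].
  split; first exact: intg.
  split; first by move=> x y y' l; rewrite /pA tv_dd; exact: tvA.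
  by move=> x x' y l; rewrite /pB tv_dd; exact: tvB.
move=> lo hi pXY lo0 lohi hd hb.
exists _, nat, (q R), (fun _ => pXY), (pA R), (pB R).
split; first by move=> *; exact: mnat.
split; first by move=> *; exact: mnat.
split; first by move=> *; exact: mnat.
split; first by move=> _; exact: hd.
split; first by move=> x y _; exact: hb.
split; first by move=> x y l; split; apply: dd_dist; [exact: al01|exact: be01].
split.
  move=> a b x y; rewrite intq; last first.
    by move=> l; rewrite -mulrA; apply: mulr_ge0; [case: hd => h _; exact: h|exact: pAB0].
  rewrite key mulr_sumr; congr EFin; apply: eq_bigr => k _; ring.
split; first by move=> x y y' l; rewrite /pA tv_dd; exact: tvA.
by move=> x x' y l; rewrite /pB tv_dd; exact: tvB.
Qed.
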